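(* For every integer $n\ge 1$, \[ m-A_m^{n}=0 \quad (m=1,\dots,2n), \qquad (2n+1)-A_{2n+1}^{n}=(-1)^n\frac{(n!)^2}{((2n)!)^2}. \]
   Context: For $n\ge1$ let $y_n(z)=\sum_{k=0}^{n}\frac{(n+k)!}{(n-k)!\,k!}\left(\frac{z}{2}\right)^k$ be the $n$-th Bessel polynomial and let $\alpha_{n1},\dots,\alpha_{nn}$ be its zeros (they are simple). Put $a_{nk}=1-\alpha_{nk}/2$ and $b_{nk}=1+\alpha_{nk}/2$ for $k=1,\dots,n$. For $m\ge1$ define $A_m^{n}=\sum_{k=1}^n\big(a_{nk}^m-b_{nk}^m\big)$. *)

(* Defs.v *)
(* zeros of Bessel polynomials live in the algebraically
   closed field algC (algebraic complex numbers). *)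
From HB Require Import structures.
From mathcomp Require Import all_boot all_order all_algebra all_field.
Set Implicit Arguments. Unset Strict Implicit. Unset Printing Implicit Defensive.
Import Order.TTheory GRing.Theory Num.Theory.
Local Open Scope ring_scope.

Definition bessel_poly (n : nat) : {poly algC} :=
  \poly_(k < n.+1)
    (((n + k)`!)%:R / (((n - k)`!)%:R * (k`!)%:R) / 2%:R ^+ k).

(* A_m^n = sum_k (a_{nk}^m - b_{nk}^m), with a = 1 - alpha/2, b = 1 + alpha/2,
   where rs enumerates the zeros alpha_{n1},...,alpha_{nn}. *)
Definition A_sum (m : nat) (rs : seq algC) : algC :=
  \sum_(a <- rs) ((1 - a / 2%:R) ^+ m - (1 + a / 2%:R) ^+ m).

(* Main.v *)
Require Import Defs.
From HB Require Import structures.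
From mathcomp Require Import all_boot all_order all_algebra all_field.
From mathcomp Require Import ring zify.
Import Order.TTheory GRing.Theory Num.Theory.
Local Open Scope ring_scope.

Lemma factr_neq0 (R : numFieldType) k : (k`!)%:R != 0 :> R.
Proof. by rewrite pnatr_eq0 -lt0n fact_gt0. Qed.

Lemma poly_roots_factor (R : fieldType) (p : {poly R}) (s : seq R) :
  size p = (size s).+1 -> uniq s -> all (root p) s ->
  p = (lead_coef p)%:P * \prod_(z <- s) ('X - z%:P).
Proof.
move=> hs hu hr.
have hu' : uniq_roots s by rewrite uniq_rootsE.
have [q hq] := uniq_roots_prod_XsubC hr hu'.
have q0 : q != 0 by apply: contra_eq_neq hs => q0; rewrite hq q0 mul0r size_poly0.
have hsq : size q = 1%N.
  move: hs; rewrite hq size_mul // ?size_prod_XsubC; last first.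
    by rewrite -size_poly_eq0 size_prod_XsubC.
  by move=> /eqP; case: (size q) => [|k] //= /eqP; lia.
have /monicP hm := monic_prod_XsubC s xpredT id.
rewrite hq lead_coefM hm mulr1 {1}(size1_polyC (eq_leq hsq)).
by rewrite /lead_coef hsq.
Qed.

Lemma lowcoef (R : fieldType) (G H K : {poly R}) M : G`_0 != 0 -> G * H = 'X^M * K ->
  (forall j, (j < M)%N -> H`_j = 0) /\ G`_0 * H`_M = K`_0.
Proof.
move=> g0 e.
have key j : (H * G)`_j = \sum_(i < j) H`_i * G`_(j - i) + G`_0 * H`_j.
  by rewrite coefM big_ord_recr /= subnn mulrC.
have low : forall j, (j < M)%N -> H`_j = 0.
  elim/ltn_ind => j IH jM.
  have := key j; rewrite mulrC e coefXnM jM big1 ?add0r.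
    by move/esym/eqP; rewrite mulf_eq0 (negbTE g0) /= => /eqP.
  by move=> i _; rewrite IH ?mul0r // (ltn_trans _ jM).
split => //.
have := key M; rewrite mulrC e coefXnM ltnn subnn big1 ?add0r //.
by move=> i _; rewrite low ?mul0r.
Qed.

Definition Sb (R : fieldType) (N : nat) (b : R) : {poly R} :=
  \poly_(i < N.+1) (if i == 0%N then 0 else b ^+ i).
Arguments Sb {R}.

Lemma Sb_eq (R : fieldType) N (b : R) : b != 0 ->
  - 'X = ('X - (b^-1)%:P) * Sb N b - (b ^+ N)%:P * 'X^(N.+1).
Proof.
move=> b0; apply/polyP => j.
rewrite coefN coefB mulrBl coefB coefXM !coefCM coefXn coefX !coef_poly.
case: j => [|j]; first by rewrite /=; ring.
case: j => [|j].
  case: N => [|N]; first by rewrite /=; ring.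
  by rewrite /= expr1 mulVf //; ring.
rewrite oppr0 !ltnS !eqSS (_ : (j.+2 == 0%N) = false) // (_ : j.+2.-1 = j.+1) //.
rewrite (_ : (j.+1 == 0%N) = false) //; case: (ltngtP j.+1 N) => h.
- by rewrite (exprS b j.+1) mulrA mulVf // mul1r mulr0 subr0 subrr.
- by rewrite /=; ring.
- by rewrite h /=; ring.
Qed.


Lemma newton (R : fieldType) N (bs : seq R) : all (fun b => b != 0) bs ->
  exists Q, - ('X * (\prod_(b <- bs) ('X - (b^-1)%:P))^`()) =
    \prod_(b <- bs) ('X - (b^-1)%:P) * \sum_(b <- bs) Sb N b + 'X^(N.+1) * Q.
Proof.
elim: bs => [|b bs IH] /=.
  by move=> _; exists 0; rewrite !big_nil -polyC1 derivC; ring.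
case/andP => b0 /IH [Q hQ].
exists (('X - (b^-1)%:P) * Q - (b ^+ N)%:P * \prod_(c <- bs) ('X - (c^-1)%:P)).
rewrite !big_cons derivM derivXsubC mul1r.
set P := \prod_(c <- bs) _.
transitivity ((- 'X) * P + ('X - (b^-1)%:P) * (- ('X * P^`()))); first by ring.
rewrite hQ (@Sb_eq _ N b b0). rewrite /P; ring.
Qed.
Definition cc (R : numFieldType) (n j : nat) : R :=
  ((2 * n - j)`!)%:R / ((j`!)%:R * ((n - j)`!)%:R).

Lemma cc_rec (R : numFieldType) n j : (j < n)%N ->
  (j.+1)%:R * (2 * n - j)%:R * cc R n j.+1 = (n - j)%:R * cc R n j.
Proof.
move=> jn; rewrite /cc.
have e1 : (2 * n - j = (2 * n - j.+1).+1)%N by lia.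
have e2 : (n - j = (n - j.+1).+1)%N by lia.
rewrite e1 e2 !factS !natrM.
have h1 := factr_neq0 R (2 * n - j.+1).
have h2 := factr_neq0 R j.
have h3 := factr_neq0 R (n - j.+1).
have h4 : (j.+1)%:R != 0 :> R by rewrite pnatr_eq0.
have h5 : (n - j.+1).+1%:R != 0 :> R by rewrite pnatr_eq0.
field; apply/and4P; split => //; by rewrite (addrC 1) natr1 pnatr_eq0.
Qed.

Definition rP (R : numFieldType) n : {poly R} := \poly_(j < n.+1) cc R n j.
Definition rM (R : numFieldType) n : {poly R} := \poly_(j < n.+1) ((-1) ^+ j * cc R n j).

Lemma rec_P (R : numFieldType) n j :
  (j.+1)%:R * (j%:R - (2 * n)%:R) * (rP R n)`_j.+1 = (j%:R - n%:R) * (rP R n)`_j.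
Proof.
rewrite /rP !coef_poly !ltnS.
case: (ltngtP j n) => h.
- rewrite (_ : j%:R - (2 * n)%:R = - (2 * n - j)%:R); last first.
    by rewrite natrB; [ring | lia].
  rewrite (_ : j%:R - n%:R = - (n - j)%:R); last by rewrite natrB; [ring | lia].
  apply/eqP; rewrite -subr_eq0; have e := @cc_rec R n j h.
  rewrite (_ : _ - _ = - ((j.+1)%:R * (2 * n - j)%:R * cc R n j.+1 - (n - j)%:R * cc R n j)).
    by rewrite e subrr oppr0.
  ring.
- by ring.
- by rewrite h subrr; ring.
Qed.


Lemma lincombP {R : comNzRingType} (k : R) {a b c d : R} : c = d -> a - b = k * (c - d) -> a = b.
Proof. by move=> -> h; apply/eqP; rewrite -subr_eq0 h subrr mulr0. Qed.

Lemma coef_rM (R : numFieldType) n j : (rM R n)`_j = (-1) ^+ j * (rP R n)`_j.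
Proof. by rewrite !coef_poly; case: ifP => _; rewrite ?mulr0. Qed.

Lemma rec_M (R : numFieldType) n j :
  (j.+1)%:R * (j%:R - (2 * n)%:R) * (rM R n)`_j.+1 = -1 * (j%:R - n%:R) * (rM R n)`_j.
Proof.
rewrite !coef_rM exprS.
transitivity (-1 * (-1) ^+ j * ((j.+1)%:R * (j%:R - (2 * n)%:R) * (rP R n)`_j.+1)).
  by ring.
by rewrite rec_P; ring.
Qed.

Lemma ode_gen (R : numFieldType) n (p : {poly R}) (s : R) :
  (forall j, (j.+1)%:R * (j%:R - (2 * n)%:R) * p`_j.+1 = s * (j%:R - n%:R) * p`_j) ->
  'X * p^`()^`() = s%:P * ('X * p^`()) + ((2 * n)%:R)%:P * p^`() - (s * n%:R)%:P * p.
Proof.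
move=> hr; apply/polyP => j.
rewrite coefXM coefB coefD !coefCM coefXM !coef_deriv.
case: j => [|j].
  have e := hr 0%N; rewrite eqxx; refine (lincombP (1 : R) e _); ring.
have e := hr j.+1; rewrite /=; refine (lincombP (1 : R) e _); ring.
Qed.

Definition Wp (R : numFieldType) n : {poly R} :=
  (rP R n)^`() * rM R n - rP R n * (rM R n)^`() - rP R n * rM R n.

Lemma odeP (R : numFieldType) n : 'X * (rP R n)^`()^`() =
  'X * (rP R n)^`() + ((2 * n)%:R)%:P * (rP R n)^`() - (n%:R)%:P * rP R n.
Proof.
have h : forall j, (j.+1)%:R * (j%:R - (2 * n)%:R) * (rP R n)`_j.+1 =
   1 * (j%:R - n%:R) * (rP R n)`_j by move=> j; rewrite mul1r rec_P.
have := @ode_gen R n (rP R n) 1 h.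
by rewrite polyC1 !mul1r.
Qed.

Lemma odeM (R : numFieldType) n : 'X * (rM R n)^`()^`() =
  - ('X * (rM R n)^`()) + ((2 * n)%:R)%:P * (rM R n)^`() + (n%:R)%:P * rM R n.
Proof.
have := @ode_gen R n (rM R n) (-1) (rec_M R n).
by rewrite polyCN polyC1 mulN1r mulN1r polyCN mulNr opprK.
Qed.

Lemma XdW (R : numFieldType) n : 'X * (Wp R n)^`() = ((2 * n)%:R)%:P * Wp R n.
Proof.
rewrite /Wp !derivE.
transitivity (('X * (rP R n)^`()^`()) * rM R n - rP R n * ('X * (rM R n)^`()^`())
   - 'X * (rP R n)^`() * rM R n - 'X * rP R n * (rM R n)^`()); first by ring.
rewrite odeP odeM; ring.
Qed.

Lemma cc_n (R : numFieldType) n : cc R n n = 1.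
Proof.
rewrite /cc (_ : (2 * n - n = n)%N); last by lia.
by rewrite subnn fact0 mulr1 divff // factr_neq0.
Qed.

Lemma cc_0 (R : numFieldType) n : cc R n 0 = ((2 * n)`!)%:R / (n`!)%:R.
Proof. by rewrite /cc !subn0 fact0 mul1r. Qed.

Lemma cc0_neq0 (R : numFieldType) n : cc R n 0 != 0.
Proof. by rewrite cc_0 mulf_neq0 ?invr_eq0 ?factr_neq0. Qed.

Lemma size_rP (R : numFieldType) n : size (rP R n) = n.+1.
Proof. by rewrite /rP size_poly_eq //= cc_n oner_neq0. Qed.

Lemma size_rM (R : numFieldType) n : size (rM R n) = n.+1.
Proof. by rewrite /rM size_poly_eq //= cc_n mulr1 signr_eq0. Qed.

Lemma lead_rP (R : numFieldType) n : lead_coef (rP R n) = 1.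
Proof. by rewrite lead_coefE size_rP coef_poly ltnSn cc_n. Qed.

Lemma lead_rM (R : numFieldType) n : lead_coef (rM R n) = (-1) ^+ n.
Proof. by rewrite lead_coefE size_rM coef_poly ltnSn cc_n mulr1. Qed.

Lemma rP_neq0 (R : numFieldType) n : rP R n != 0.
Proof. by rewrite -size_poly_eq0 size_rP. Qed.

Lemma rM_neq0 (R : numFieldType) n : rM R n != 0.
Proof. by rewrite -size_poly_eq0 size_rM. Qed.

Lemma W_top (R : numFieldType) n : (Wp R n)`_(2 * n) = - (-1) ^+ n.
Proof.
have sP := size_rP R n; have sM := size_rM R n.
have dP := lt_size_deriv (rP_neq0 R n); have dM := lt_size_deriv (rM_neq0 R n).
rewrite /Wp !coefB.
rewrite (@nth_default _ 0 ((rP R n)^`() * rM R n)); last first.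
  apply: leq_trans (size_polyMleq _ _) _; rewrite sM; move: dP; rewrite sP; lia.
rewrite (@nth_default _ 0 (rP R n * (rM R n)^`())); last first.
  apply: leq_trans (size_polyMleq _ _) _; rewrite sP; move: dM; rewrite sM; lia.
have sPM : size (rP R n * rM R n) = (2 * n).+1.
  by rewrite size_mul ?rP_neq0 ?rM_neq0 // sP sM; lia.
have := lead_coefM (rP R n) (rM R n).
rewrite lead_rP lead_rM mul1r lead_coefE sPM /= => ->.
by rewrite subrr sub0r.
Qed.

Lemma W_eq (R : numFieldType) n : Wp R n = (- (-1) ^+ n)%:P * 'X^(2 * n).
Proof.
apply/polyP => j; rewrite coefCM coefXn.
case: eqP => [->|hj]; first by rewrite mulr1 W_top.
rewrite mulr0.
have e : j%:R * (Wp R n)`_j = (2 * n)%:R * (Wp R n)`_j.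
  have := congr1 (fun p : {poly R} => p`_j) (XdW R n); rewrite /= coefXM coefCM.
  case: j hj => [|j] hj /=; first by rewrite mul0r.
  by rewrite coef_deriv (mulr_natl _ j.+1).
move/eqP: e; rewrite -subr_eq0 -mulrBl mulf_eq0 => /orP [|/eqP //].
by rewrite subr_eq0 eqr_nat => /eqP.
Qed.

Definition bess (R : numFieldType) n : {poly R} := \poly_(k < n.+1)
    (((n + k)`!)%:R / (((n - k)`!)%:R * (k`!)%:R) / 2%:R ^+ k).
Definition Asum (R : numFieldType) (m : nat) (rs : seq R) : R :=
  \sum_(a <- rs) ((1 - a / 2%:R) ^+ m - (1 + a / 2%:R) ^+ m).
Arguments Asum {R}.

Lemma two_neq0 (R : numFieldType) : (2%:R : R) != 0.
Proof. by rewrite pnatr_eq0. Qed.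

Lemma root_link (R : numFieldType) n (b : R) : b != 0 ->
  b ^+ n * (rP R n).[b^-1] = (bess R n).[2%:R * b].
Proof.
move=> b0.
rewrite horner_poly big_distrr (reindex_inj rev_ord_inj) horner_poly.
apply: eq_bigr => i _ /=; rewrite subSS.
have hi : (i <= n)%N by rewrite -ltnS.
rewrite /cc (_ : (2 * n - (n - i) = n + i)%N); last by lia.
rewrite (_ : (n - (n - i) = i)%N); last by lia.
rewrite (_ : b ^+ n = b ^+ (n - i) * b ^+ i); last by rewrite -exprD subnK.
have h1 := factr_neq0 R (n - i); have h2 := factr_neq0 R i.
have h3 : b ^+ (n - i) != 0 by rewrite expf_neq0.
have h4 : (2%:R : R) ^+ i != 0 by rewrite expf_neq0 // two_neq0.
rewrite exprVn exprMn; field.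
by rewrite h1 h2 h3 h4.
Qed.

Lemma rM_eval (R : numFieldType) n (x : R) : (rM R n).[- x] = (rP R n).[x].
Proof.
rewrite !horner_poly; apply: eq_bigr => i _; rewrite (exprNn x).
transitivity (((-1) ^+ i * (-1) ^+ i) * (cc R n i * x ^+ i)); first by ring.
by rewrite -exprMn mulrNN mulr1 expr1n mul1r.
Qed.

Lemma coef_Sb (R : fieldType) N (b : R) j : (j <= N)%N ->
  (Sb N b)`_j = if j == 0%N then 0 else b ^+ j.
Proof. by move=> h; rewrite coef_poly ltnS h. Qed.

Lemma newton_scaled (R : fieldType) N (bs : seq R) (L : R) (p : {poly R}) :
  all (fun b => b != 0) bs -> p = L%:P * \prod_(b <- bs) ('X - (b^-1)%:P) ->
  exists Q, - ('X * p^`()) = p * \sum_(b <- bs) Sb N b + 'X^(N.+1) * Q.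
Proof.
move=> h ->; have [Q hQ] := @newton R N bs h.
exists (L%:P * Q); rewrite derivM derivC mul0r add0r.
transitivity (L%:P * - ('X * (\prod_(b <- bs) ('X - (b^-1)%:P))^`())); first by ring.
by rewrite hQ; ring.
Qed.

Lemma Asum_exp (R : numFieldType) m (rs : seq R) : Asum m rs =
  \sum_(i < m.+1) (\sum_(a <- rs) ((- (a / 2%:R)) ^+ i - (a / 2%:R) ^+ i)) *+ 'C(m, i).
Proof.
rewrite /Asum.
transitivity (\sum_(a <- rs) \sum_(i < m.+1)
   ((- (a / 2%:R)) ^+ i - (a / 2%:R) ^+ i) *+ 'C(m, i)).
  apply: eq_bigr => a _.
  rewrite (addrC 1 (a / _)) (addrC 1 (- _)) !exprD1n -sumrB.
  by apply: eq_bigr => i _; rewrite mulrnBl.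
rewrite exchange_big /=; apply: eq_bigr => i _.
by rewrite sumrMnl.
Qed.

Lemma sum_ind1 (R : numFieldType) m : (0 < m)%N ->
  \sum_(i < m.+1) (((i : nat) == 1%N)%:R : R) *+ 'C(m, i) = m%:R.
Proof.
case: m => [//|m] _.
rewrite big_ord_recl big_ord_recl big1 ?addr0 /=.
  by rewrite mul0rn add0r /bump /= bin1.
by move=> i _; rewrite mul0rn.
Qed.

Lemma gen (R : numFieldType) (n : nat) (hn : (1 <= n)%N) (rs : seq R)
  (hu : uniq rs) (hs : size rs = n) (hr : all (root (bess R n)) rs) :
  (forall m : nat, (1 <= m <= 2 * n)%N -> m%:R - Asum m rs = 0) /\
  ((2 * n).+1)%:R - Asum (2 * n).+1 rs
    = (-1) ^+ n * ((n`!)%:R ^+ 2) / (((2 * n)`!)%:R ^+ 2).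
Proof.
set N := (2 * n).+1.
have h2 := two_neq0 R.
have nz : forall a, a \in rs -> a / 2%:R != 0.
  move=> a ain; rewrite mulf_neq0 ?invr_eq0 //.
  apply: contraTneq (allP hr a ain) => ->.
  rewrite /root horner_coef0 coef_poly /= addn0 subn0 fact0 mulr1 expr0 divr1.
  by rewrite divff ?oner_eq0 ?factr_neq0.
have rootsP : forall a, a \in rs -> root (rP R n) (a / 2%:R)^-1.
  move=> a ain; have := @root_link R n _ (nz a ain).
  rewrite mulrCA divff // mulr1 (rootP (allP hr a ain)) => /eqP.
  by rewrite mulf_eq0 expf_eq0 (negbTE (nz a ain)) andbF /=.
have rootM : forall a, a \in rs -> root (rM R n) (- (a / 2%:R))^-1.
  by move=> a ain; rewrite /root invrN rM_eval; exact: rootsP.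
have injf : injective (fun a : R => (a / 2%:R)^-1).
  by move=> a b /invr_inj /mulIf; apply; rewrite invr_eq0.
have injg : injective (fun a : R => (- (a / 2%:R))^-1).
  by move=> a b /invr_inj /oppr_inj /mulIf; apply; rewrite invr_eq0.
have fP : rP R n = (lead_coef (rP R n))%:P *
    \prod_(b <- [seq a / 2%:R | a <- rs]) ('X - (b^-1)%:P).
  rewrite big_map -(big_map (fun a => (a / 2%:R)^-1) xpredT (fun z => 'X - z%:P)).
  apply: poly_roots_factor; first by rewrite size_map hs size_rP.
    by rewrite map_inj_uniq.
  by apply/allP => z /mapP [a ain ->]; exact: rootsP.
have fM : rM R n = (lead_coef (rM R n))%:P *
    \prod_(b <- [seq - (a / 2%:R) | a <- rs]) ('X - (b^-1)%:P).
  rewrite big_map -(big_map (fun a => (- (a / 2%:R))^-1) xpredT (fun z => 'X - z%:P)).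
  apply: poly_roots_factor; first by rewrite size_map hs size_rM.
    by rewrite map_inj_uniq.
  by apply/allP => z /mapP [a ain ->]; exact: rootM.
have nz1 : all (fun b => b != 0) [seq a / 2%:R | a <- rs].
  by apply/allP => b /mapP [a ain ->]; exact: nz.
have nz2 : all (fun b => b != 0) [seq - (a / 2%:R) | a <- rs].
  by apply/allP => b /mapP [a ain ->]; rewrite oppr_eq0; exact: nz.
have [Q1 e1] := @newton_scaled R N _ _ _ nz1 fP.
have [Q2 e2] := @newton_scaled R N _ _ _ nz2 fM.
set T1 := \sum_(b <- [seq a / 2%:R | a <- rs]) Sb N b in e1.
set T2 := \sum_(b <- [seq - (a / 2%:R) | a <- rs]) Sb N b in e2.
have GH : rP R n * rM R n * (T1 - T2 + 'X) =
    'X^N * ((-1) ^+ n)%:P + 'X^N * ('X * (rP R n * Q2 - Q1 * rM R n)).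
  have f1 : rP R n * T1 = - ('X * (rP R n)^`()) - 'X^(N.+1) * Q1 by rewrite e1; ring.
  have f2 : rM R n * T2 = - ('X * (rM R n)^`()) - 'X^(N.+1) * Q2 by rewrite e2; ring.
  transitivity ((rP R n * T1) * rM R n - rP R n * (rM R n * T2) + 'X * rP R n * rM R n).
    by ring.
  rewrite f1 f2.
  transitivity (- ('X * Wp R n) + 'X^(N.+1) * (rP R n * Q2 - Q1 * rM R n)).
    by rewrite /Wp; ring.
  rewrite W_eq polyCN (exprS _ N) /N (exprS _ (2 * n)); ring.
rewrite -mulrDr in GH.
set H := T1 - T2 + 'X in GH.
have G0 : (rP R n * rM R n)`_0 = cc R n 0 * cc R n 0.
  by rewrite coef0M !coef_poly /= expr0 mul1r.
have G0n : (rP R n * rM R n)`_0 != 0 by rewrite G0 mulf_neq0 ?cc0_neq0.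
have [low top] := @lowcoef R _ _ _ _ G0n GH.
have Dh : forall j, (j <= N)%N ->
    \sum_(a <- rs) ((- (a / 2%:R)) ^+ j - (a / 2%:R) ^+ j) = (j == 1%N)%:R - H`_j.
  move=> j hj; rewrite /H coefD coefB /T1 /T2 !coef_sum coefX !big_map.
  under eq_bigr do rewrite coef_Sb //.
  under [X in _ = _ - (_ - X + _)]eq_bigr do rewrite coef_Sb //.
  case: (eqVneq j 0%N) => [->|j0].
    rewrite !big1_eq /=.
    under eq_bigr do rewrite !expr0 subrr.
    by rewrite big1_eq; ring.
  by rewrite sumrB; ring.
have key : forall m, (1 <= m <= N)%N ->
    m%:R - Asum m rs = \sum_(i < m.+1) H`_i *+ 'C(m, i).
  move=> m /andP [m1 mN]; rewrite Asum_exp.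
  rewrite (eq_bigr (fun i : 'I_m.+1 => (((i : nat) == 1%N)%:R - H`_i) *+ 'C(m, i))).
    by under eq_bigr do rewrite mulrnBl; rewrite sumrB sum_ind1 //; ring.
  move=> i _; rewrite Dh // -ltnS (leq_trans (ltn_ord i)) //.
split.
  move=> m /andP [m1 m2]; rewrite key; last by apply/andP; split; rewrite // /N; lia.
  by apply: big1 => i _; rewrite low ?mul0rn //; have := ltn_ord i; rewrite /N; lia.
rewrite key; last by apply/andP; split; rewrite // /N; lia.
rewrite big_ord_recr /= big1 ?add0r; last first.
  by move=> i _; rewrite low ?mul0rn.
rewrite binn mulr1n.
have k0 : (((-1) ^+ n)%:P + 'X * (rP R n * Q2 - Q1 * rM R n))`_0 = (-1) ^+ n.
  by rewrite coefD coefC coefXM /= addr0.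
rewrite k0 G0 cc_0 in top.
have hH : H`_N = (-1) ^+ n / (((2 * n)`!)%:R / (n`!)%:R * (((2 * n)`!)%:R / (n`!)%:R)).
  by rewrite -top mulrC mulKf // mulf_neq0 // -cc_0 cc0_neq0.
rewrite hH; field.
by rewrite !factr_neq0.
Qed.

Theorem proposition1 (n : nat) (hn : (1 <= n)%N) (rs : seq algC)
  (hu : uniq rs) (hs : size rs = n) (hr : all (root (bessel_poly n)) rs) :
  (forall m : nat, (1 <= m <= 2 * n)%N -> m%:R - A_sum m rs = 0) /\
  ((2 * n).+1)%:R - A_sum (2 * n).+1 rs
    = (-1) ^+ n * ((n`!)%:R ^+ 2) / (((2 * n)`!)%:R ^+ 2).
Proof. exact: (@gen algC n hn rs hu hs hr). Qed.
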